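(* Let $R$ be an associative ring with identity and $a,b,c,d\in R$ such that both $a^{\|(b,c)}$ and $d^{\|(b,c)}$ exist. Then the following are equivalent: (i) $a^{\|(b,c)}a=dd^{\|(b,c)}$; (ii) $a^{\|(b,c)}dd^{\|(b,c)}a=dd^{\|(b,c)}aa^{\|(b,c)}$; (iii) $d^{\|(b,c)}da^{\|(b,c)}a=da^{\|(b,c)}ad^{\|(b,c)}$; (iv) $a^{\|(b,c)}=dd^{\|(b,c)}a^{\|(b,c)}$ and $d^{\|(b,c)}=d^{\|(b,c)}a^{\|(b,c)}a$; (v) $a^{\|(b,c)}ad^{\|(b,c)}=d^{\|(b,c)}a^{\|(b,c)}a$ and $a^{\|(b,c)}dd^{\|(b,c)}=dd^{\|(b,c)}a^{\|(b,c)}$. Moreover, if any of these holds, then $ad$ has a $(b,c)$-inverse and $(ad)^{\|(b,c)}=d^{\|(b,c)}a^{\|(b,c)}$.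
   Context: For $a,b,c\in R$, $a$ is $(b,c)$-invertible if there exists $y\in R$ with $y\in (bRy)\cap(yRc)$, $yab=b$ and $cay=c$; such $y$ is unique and denoted $a^{\|(b,c)}$. *)

(* Defs.v *)
From HB Require Import structures.
From mathcomp Require Import all_boot all_order all_algebra.
Set Implicit Arguments. Unset Strict Implicit. Unset Printing Implicit Defensive.
Import GRing.Theory.
Local Open Scope ring_scope.

Definition is_bc_inverse (R : pzRingType) (a b c y : R) : Prop :=
  [/\ exists r : R, y = b * r * y,
      exists s : R, y = y * s * c,
      y * a * b = b
    & c * a * y = c].

(* Main.v *)
Require Import Defs.
From HB Require Import structures.
From mathcomp Require Import all_boot all_order all_algebra.
Import GRing.Theory.
Local Open Scope ring_scope.

Lemma fixL (R : pzRingType) (x b c y z : R) :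
  is_bc_inverse x b c y -> (exists r, z = b * r * z) -> y * x * z = z.
Proof.
case=> _ _ H _ [r ->]; by rewrite !mulrA H.
Qed.

Lemma fixR (R : pzRingType) (x b c y z : R) :
  is_bc_inverse x b c y -> (exists s, z = z * s * c) -> z * x * y = z.
Proof.
case=> _ _ _ H [s ->]; by rewrite -!mulrA (mulrA c) H.
Qed.

Theorem theorem4p5 (R : pzRingType) (a b c d ya yd : R)
  (Ha : is_bc_inverse a b c ya) (Hd : is_bc_inverse d b c yd) :
  [<-> ya * a = d * yd;
       ya * d * yd * a = d * yd * a * ya;
       yd * d * ya * a = d * ya * a * yd;
       ya = d * yd * ya /\ yd = yd * ya * a;
       ya * a * yd = yd * ya * a /\ ya * d * yd = d * yd * ya]
  /\ (ya * a = d * yd ->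
        is_bc_inverse (a * d) b c (yd * ya) /\
        (forall y : R, is_bc_inverse (a * d) b c y -> y = yd * ya)).
Proof.
have Ha' := Ha; have Hd' := Hd.
case: Ha' => [[ra Ra] [sa Sa] Hab Hca].
case: Hd' => [[rd Rd] [sd Sd] Hdb Hcd].
have F1 : ya * a * ya = ya by apply: (@fixL _ _ _ _ _ _ Ha); exists ra.
have F2 : ya * a * yd = yd by apply: (@fixL _ _ _ _ _ _ Ha); exists rd.
have F3 : yd * d * ya = ya by apply: (@fixL _ _ _ _ _ _ Hd); exists ra.
have F4 : yd * a * ya = yd by apply: (@fixR _ _ _ _ _ _ Ha); exists sd.
have F5 : ya * d * yd = ya by apply: (@fixR _ _ _ _ _ _ Hd); exists sa.
have F6 : yd * d * yd = yd by apply: (@fixL _ _ _ _ _ _ Hd); exists rd.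
have G : forall (u v w : R), u * v * w = w -> forall x, u * (v * (w * x)) = w * x.
  by move=> u v w E x; rewrite !mulrA E.
have G0 : forall (u v w : R), u * v * w = w -> u * (v * w) = w.
  by move=> u v w E; rewrite mulrA E.
have K1 := G _ _ _ F1 ; have K2 := G _ _ _ F2; have K3 := G _ _ _ F3.
have K6 := G _ _ _ F6.
have L1 := G0 _ _ _ F1 ; have L2 := G0 _ _ _ F2; have L3 := G0 _ _ _ F3.
have L6 := G0 _ _ _ F6.
have H4 : forall x, yd * (a * (ya * x)) = yd * x by move=> x; rewrite !mulrA F4.
have H5 : forall x, ya * (d * (yd * x)) = ya * x by move=> x; rewrite !mulrA F5.
have M4 : yd * (a * ya) = yd by rewrite mulrA F4.
have M5 : ya * (d * yd) = ya by rewrite mulrA F5.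
split.
  tfae; rewrite -!mulrA ?K1 ?K2 ?K3 ?K6 ?L1 ?L2 ?L3 ?L6 ?H4 ?H5 ?M4 ?M5.
  - by [].
  - by [].
  - by move=> H; split; [rewrite mulrA -H F1 | rewrite H L6].
  - by case=> H1 H2; split.
  - by case=> H1 H2; rewrite {1}H2 -!mulrA -H1.
move=> H.
have Hinv : is_bc_inverse (a * d) b c (yd * ya).
  split.
  - by exists rd; rewrite {1}Rd !mulrA.
  - by exists sa; rewrite {1}Sa !mulrA.
  - have -> : yd * ya * (a * d) * b = yd * (ya * a) * d * b by rewrite !mulrA.
    by rewrite H mulrA F6 Hdb.
  - have -> : c * (a * d) * (yd * ya) = c * a * (d * yd) * ya by rewrite !mulrA.
    by rewrite -H -!mulrA L1 mulrA Hca.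
split=> // y Hy.
case: (Hy) => [[r Ry] _ _ _].
case: (Hinv) => [_ [s Sz] _ _].
have E1 : yd * ya * (a * d) * y = y by apply: (@fixL _ _ _ _ _ _ Hinv); exists r.
have E2 : yd * ya * (a * d) * y = yd * ya by apply: (@fixR _ _ _ _ _ _ Hy); exists s.
by rewrite -E1 E2.
Qed.
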